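(* Let $q\ge2$ be a prime power and let $f\in\mathbb{F}_q[x]$ be nonzero. If $m\ge 1$ is an integer with $q^m\ge \deg f$, then $$E(f)\le \prod_{\deg p\le m}\left(1+\frac{1}{|p|}\right),$$ where the product runs over all monic irreducible polynomials $p\in\mathbb{F}_q[x]$ of degree at most $m$.
   Context: For $f\in\mathbb{F}_q[x]$, $|f|=q^{\deg f}$. The letter $p$ always denotes a monic irreducible polynomial in $\mathbb{F}_q[x]$, and $E(f)=\prod_{p\mid f}\left(1+\frac{1}{|p|}\right)$, the product over monic irreducible divisors $p$ of $f$. *)

(* Defs.v *)
From HB Require Import structures.
From mathcomp Require Import all_boot all_order all_algebra all_field.
From mathcomp Require Import boolp classical_sets fsbigop reals.
Set Implicit Arguments. Unset Strict Implicit. Unset Printing Implicit Defensive.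
Import Order.TTheory GRing.Theory Num.Theory.
Local Open Scope ring_scope.
Local Open Scope classical_set_scope.

Definition pnorm (F : finFieldType) (p : {poly F}) : nat := (#|F| ^ (size p).-1)%N.

Definition efac (R : realType) (F : finFieldType) (p : {poly F}) : R :=
  1 + ((pnorm p)%:R)^-1.

Definition monic_irr (F : finFieldType) : set {poly F} :=
  [set p | p \is monic /\ irreducible_poly p].

Definition E (R : realType) (F : finFieldType) (f : {poly F}) : R :=
  \big[*%R/1]_(p \in [set p | monic_irr p /\ p %| f]) efac R p.

Definition Pm (R : realType) (F : finFieldType) (m : nat) : R :=
  \big[*%R/1]_(p \in [set p : {poly F} | monic_irr p /\ ((size p).-1 <= m)%N]) efac R p.

(* Main.v *)
Require Import Defs.
From HB Require Import structures.
From mathcomp Require Import all_boot all_order all_algebra all_field.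
From mathcomp Require Import boolp classical_sets fsbigop reals.
From mathcomp Require Import all_solvable.
From Stdlib Require Import Classical.
From Stdlib Require Import Lia.
From mathcomp Require Import zify.
From mathcomp Require Import ring lra.
Set Implicit Arguments. Unset Strict Implicit. Unset Printing Implicit Defensive.
Import Order.TTheory GRing.Theory Num.Theory.
Local Open Scope ring_scope.

Lemma prod_lower (R : realFieldType) (I : eqType) (t : seq I) (G : I -> R) b :
  0 <= b -> (forall i, i \in t -> 1 + b <= G i) ->
  1 + (size t)%:R * b <= \prod_(i <- t) G i.
Proof.
move=> b0; elim: t => [|x t IH] H; first by rewrite big_nil mul0r addr0.
rewrite big_cons /=.
have h1 := H x (mem_head _ _).
have h2 : 1 + (size t)%:R * b <= \prod_(i <- t) G i.
  by apply: IH => i it; apply: H; rewrite inE it orbT.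
have h3 : 0 <= (size t)%:R * b by rewrite mulr_ge0 // ler0n.
have h4 : (1 + b) * (1 + (size t)%:R * b) <= G x * \prod_(i <- t) G i.
  by apply: ler_pM => //; lra.
rewrite -addn1 natrD mulrDl mul1r.
have h5 : 0 <= b * ((size t)%:R * b) by rewrite mulr_ge0.
nra.
Qed.

Lemma prod_upper (R : realFieldType) (I : eqType) (t : seq I) (G : I -> R) a :
  0 <= a -> (forall i, i \in t -> 0 <= G i <= 1 + a) ->
  2 * (size t)%:R * a <= 1 ->
  \prod_(i <- t) G i <= 1 + 2 * (size t)%:R * a.
Proof.
move=> a0; elim: t => [|x t IH] H; first by rewrite big_nil mulr0 mul0r addr0.
rewrite big_cons /= -addn1 natrD => hs.
have /andP [g0 g1] := H x (mem_head _ _).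
have hs' : 2 * (size t)%:R * a <= 1 by lra.
have h2 : \prod_(i <- t) G i <= 1 + 2 * (size t)%:R * a.
  by apply: IH => // i it; apply: H; rewrite inE it orbT.
have p0 : 0 <= \prod_(i <- t) G i.
  rewrite big_seq; apply: prodr_ge0 => i it.
  by have /andP [] : 0 <= G i <= 1 + a by apply: H; rewrite inE it orbT.
have h3 : G x * \prod_(i <- t) G i <= (1 + a) * (1 + 2 * (size t)%:R * a).
  by apply: ler_pM.
have h4 : 0 <= (size t)%:R * a by rewrite mulr_ge0 // ler0n.
have h5 : 2 * (size t)%:R * a * a <= a by rewrite -[X in _ <= X]mul1r ler_wpM2r.
nra.
Qed.

Section Fld.
Variable F : finFieldType.

Lemma in_qpoly_eq0 (h : {poly F}) (hMi : monic_irreducible_poly h) p :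
  (in_qpoly h p == 0) = (h %| p).
Proof.
have hM : h \is monic by case: hMi.
apply/eqP/idP => [/val_eqP /= | hDp].
  by rewrite -Pdiv.IdomainMonic.modpE mk_monicE.
by apply/val_eqP; rewrite /= -Pdiv.IdomainMonic.modpE mk_monicE.
Qed.

Lemma cardF_pnat : exists p, p \in [pchar F] /\ (p : nat_pred).-nat #|F|.
Proof.
have [p pr pc] := finPcharP F.
exists p; split => //.
have := abelem_pgroup (fin_ring_pchar_abelem pc).
by rewrite /pgroup cardsT.
Qed.

Lemma expf_cardX (x : F) m : x ^+ (#|F| ^ m) = x.
Proof.
elim: m => [|m IH]; first by rewrite expn0 expr1.
by rewrite expnSr exprM IH expf_card.
Qed.

Lemma deg_le_of_dvd (h : {poly F}) m : (0 < m)%N ->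
  h \is monic -> irreducible_poly h -> h %| 'X^(#|F| ^ m) - 'X ->
  ((size h).-1 <= m)%N.
Proof.
move=> m0 hM hI hD.
have q1 := finNzRing_gt1 F.
have hMi : monic_irreducible_poly h by split.
pose K := {poly %/ h with hMi}.
set Q := (#|F| ^ m)%N.
have Q1 : (1 < Q)%N by rewrite /Q -(expn0 #|F|) ltn_exp2l.
have [p [pc pn]] := cardF_pnat.
have pcK : p \in [pchar K] by rewrite pchar_qpoly.
have QK : [pchar K].-nat Q.
  by rewrite (eq_pnat _ (pcharf_eq pcK)) /Q pnatX pn.
have qX : ('qX : K) ^+ Q = 'qX.
  apply/eqP; rewrite -subr_eq0.
  have -> : ('qX : K) ^+ Q - 'qX = in_qpoly h ('X^Q - 'X).
    by rewrite rmorphB rmorphXn.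
  by rewrite in_qpoly_eq0.
have allK : forall y : K, y ^+ Q = y.
  move=> y.
  have -> : y = in_qpoly h (val y).
    by apply: val_inj => /=; rewrite Pdiv.CommonRing.rmodp_small // size_mk_monic.
  have := in_qpoly_comp_horner h (val y) 'X; rewrite comp_polyXr => ->.
  move: (val y) => r0; elim/poly_ind: r0 => [|r c IH].
    by rewrite rmorph0 horner0 expr0n gtn_eqF // ltnW.
  rewrite rmorphD rmorphM /= map_polyX map_polyC /= !hornerE.
  by rewrite exprDn_pchar // exprMn IH qX -rmorphXn expf_cardX.
pose P : {poly K} := 'X^Q - 'X.
have sXQ := size_polyXn K Q.
have sX := size_polyX K.
have Pn0 : P != 0.
  by rewrite -size_poly_eq0 /P size_polyDl sXQ // size_polyN size_polyX; change (2 < Q.+1)%N; rewrite ltnS.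
have := max_poly_roots Pn0 (rs := enum K).
rewrite enum_uniq; have -> : all (root P) (enum K).
  by apply/allP => y _; rewrite /root /P !hornerE allK subrr.
move=> /(_ isT isT). rewrite -cardE card_qfpoly /P size_polyDl sXQ //; last first.
  by rewrite size_polyN size_polyX; change (2 < Q.+1)%N; rewrite ltnS.
by rewrite ltnS /Q leq_exp2l.
Qed.
End Fld.

Section Pol.
Variable F : finFieldType.
Implicit Types p q h g : {poly F}.

Lemma irr_factor_exists n h : (size h <= n)%N -> (1 < size h)%N ->
  exists p, [/\ p \is monic, irreducible_poly p & p %| h].
Proof.
elim: n h => [|n IH] h hs h1; first by move: hs; rewrite leqn0 => /eqP E; rewrite E in h1.
have hn0 : h != 0 by rewrite -size_poly_gt0 ltnW.
have [hI|hNI] := classic (irreducible_poly h).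
  have e : (lead_coef h)^-1 *: h %= h by rewrite eqp_scale // invr_eq0 lead_coef_eq0.
  exists ((lead_coef h)^-1 *: h); split.
  - by apply/monicP; rewrite lead_coefZ mulVf // lead_coef_eq0.
  - split; first by rewrite size_scale ?invr_eq0 ?lead_coef_eq0.
    move=> q sq qd; apply: (@eqp_trans _ h); last by rewrite eqp_sym.
    by apply: (apply_irredp hI sq); rewrite -(eqp_dvdr _ e).
  - by rewrite (eqp_dvdl _ e).
have : ~ (forall q, size q != 1%N -> q %| h -> q %= h).
  by move=> H; apply: hNI; split.
move=> /not_all_ex_not [q Hq].
have [sq Hq2] := imply_to_and _ _ Hq.
have [qd nqe] := imply_to_and _ _ Hq2.
have qn0 : q != 0 by apply: contraTneq qd => ->; rewrite dvd0p.
have sqh : (size q < size h)%N.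
  rewrite ltn_neqAle dvdp_leq // andbT dvdp_size_eqp //.
  by apply/negP.
have q1 : (1 < size q)%N.
  by rewrite ltn_neqAle eq_sym sq /= size_poly_gt0.
have [p [pm pi pd]] := IH q (leq_trans sqh hs) q1.
by exists p; split => //; apply: dvdp_trans pd qd.
Qed.

Lemma coprime_distinct p q : p \is monic -> irreducible_poly p ->
  q \is monic -> irreducible_poly q -> p != q -> coprimep p q.
Proof.
move=> pm pI qm qI pq; rewrite irreducible_poly_coprime //.
apply/negP => pdq.
have : p %= q by apply: (apply_irredp qI) => //; case: pI => s1 _; rewrite neq_ltn s1 orbT.
by rewrite eqp_monic // (negPf pq).
Qed.

Lemma coprime_prod p s : p \is monic -> irreducible_poly p ->
  (forall q, q \in s -> q \is monic /\ irreducible_poly q) -> p \notin s ->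
  coprimep p (\prod_(q <- s) q).
Proof.
move=> pm pI; elim: s => [|q s IH] H ps; first by rewrite big_nil coprimep1.
rewrite big_cons coprimepMr; apply/andP; split.
  have [qm qI] := H q (mem_head _ _).
  apply: coprime_distinct => //; apply: contraNneq ps => ->; exact: mem_head.
apply: IH; first by move=> r rs; apply: H; rewrite inE rs orbT.
by apply: contra ps => ps'; rewrite inE ps' orbT.
Qed.

Lemma prod_dvd g s : uniq s ->
  (forall q, q \in s -> [/\ q \is monic, irreducible_poly q & q %| g]) ->
  \prod_(q <- s) q %| g.
Proof.
elim: s => [|q s IH] /=; first by rewrite big_nil dvd1p.
move=> /andP [qs us] H.
have [qm qI qg] := H q (mem_head _ _).
rewrite big_cons Gauss_dvdp ?qg ?IH //.
  by move=> r rs; apply: H; rewrite inE rs orbT.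
apply: coprime_prod => // r rs; have [] := H r; first by rewrite inE rs orbT.
by [].
Qed.

Lemma size_prod_monic s : (forall q, q \in s -> q \is monic) ->
  size (\prod_(q <- s) q) = (\sum_(q <- s) (size q).-1).+1.
Proof.
elim: s => [|q s IH] H; first by rewrite !big_nil size_poly1.
have qm := H q (mem_head _ _).
have IH' : size (\prod_(q <- s) q) = (\sum_(q <- s) (size q).-1).+1.
  by apply: IH => r rs; apply: H; rewrite inE rs orbT.
rewrite !big_cons size_monicM //; last first.
  by rewrite -size_poly_eq0 IH'.
rewrite IH' addnS /=.
have : (0 < size q)%N by rewrite size_poly_gt0 monic_neq0.
by case: (size q).
Qed.

End Pol.

Section Main.
Variable F : finFieldType.
Implicit Types p q h g : {poly F}.

Lemma natQ0 m : (0 < m)%N -> forall x : {poly F}, x *+ (#|F| ^ m) = 0.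
Proof.
move=> m0 x.
have [p [pc pn]] := cardF_pnat F.
have q1 := finNzRing_gt1 F.
have pd : (p %| #|F|)%N.
  have h1 : pdiv #|F| \in \pi(#|F|)%N by rewrite pi_pdiv.
  have := @pnatPpi _ _ (pdiv #|F|) pn h1.
  by rewrite inE => /eqP <-; exact: pdiv_dvd.
have pQ : (p %| #|F| ^ m)%N by rewrite -(prednK m0) expnS dvdn_mulr.
have pcP : p \in [pchar {poly F}] by rewrite pchar_poly.
rewrite -(divnK pQ) mulrnA.
by rewrite mulrn_pchar. 
Qed.


Lemma sqfree_XQ m p : (0 < m)%N -> (1 < size p)%N ->
  ~~ (p * p %| 'X^(#|F| ^ m) - 'X).
Proof.
move=> m0 sp; apply/negP => /dvdpP [r Er].
have : p %| ('X^(#|F| ^ m) - 'X)^`().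
  rewrite Er !derivM; apply/dvdpP; exists (p^`() * r + p^`() * r + p * r^`()).
  by rewrite !mulrDl; ring.
rewrite derivB derivXn derivX natQ0 // sub0r dvdpNr dvdp1.
by move=> /eqP e; rewrite e in sp.
Qed.

Lemma XQ_dvd_prod m (D : seq {poly F}) : (0 < m)%N -> uniq D ->
  (forall p, p \in D -> p \is monic /\ irreducible_poly p) ->
  (forall p, p \is monic -> irreducible_poly p -> ((size p).-1 <= m)%N -> p \in D) ->
  'X^(#|F| ^ m) - 'X %| \prod_(p <- D) p.
Proof.
move=> m0 uD HD1 HD2.
set g := 'X^(#|F| ^ m) - 'X.
have gn0 : g != 0.
  rewrite -size_poly_eq0 /g size_polyDl size_polyXn // size_polyN size_polyX ltnS.
  change (1 < #|F| ^ m)%N; by rewrite -(expn0 #|F|) ltn_exp2l // finNzRing_gt1.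
suff H : forall n h, (size h <= n)%N -> h %| g -> h %| \prod_(p <- D) p.
  exact: (H _ g (leqnn _) (dvdpp g)).
elim=> [|n IH] h hs hg.
  move: hs; rewrite leqn0 size_poly_eq0 => /eqP E; move: hg.
  by rewrite E dvd0p => /eqP E2; rewrite E2 eqxx in gn0.
have hn0 : h != 0 by apply/eqP => E; move: hg; rewrite E dvd0p => /eqP E2; rewrite E2 eqxx in gn0.
have [h1|h1] := leqP (size h) 1.
  have : size h == 1%N by rewrite eqn_leq h1 size_poly_gt0.
  rewrite -dvdp1 => /dvdp_trans; apply; exact: dvd1p.
have [p [pm pI ph]] := irr_factor_exists (leqnn _) h1.
have pg : p %| g := dvdp_trans ph hg.
have pD : p \in D by apply: HD2 => //; apply: deg_le_of_dvd.
set h' := h %/ p.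
have Eh : h = h' * p by rewrite /h' divpK.
have h'n0 : h' != 0 by apply: contraNneq hn0 => E; rewrite Eh E mul0r.
have sp : (1 < size p)%N by case: pI.
have nph : ~~ (p %| h').
  apply/negP => /dvdpP [r Er].
  suff : p * p %| g by apply/negP; exact: sqfree_XQ.
  by apply: (dvdp_trans _ hg); rewrite Eh Er -mulrA dvdp_mull.
have cp : coprimep h' p by rewrite coprimep_sym irreducible_poly_coprime.
rewrite Eh Gauss_dvdp //; apply/andP; split.
  apply: IH.
    rewrite -ltnS; apply: leq_trans hs; rewrite Eh size_Mmonic //.
    by move: sp; case: (size p) => [|[|k]] //= _; rewrite !addnS /= ltnS leq_addr.
  by apply: (dvdp_trans _ hg); rewrite Eh dvdp_mulIl.
by rewrite (big_rem _ pD) /= dvdp_mulIl.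
Qed.

End Main.

Local Open Scope classical_set_scope.

Lemma fsbig_univ (R : realType) (T : choiceType) (A : set T) (r : seq T) (f : T -> R) :
  uniq r -> (forall i, A i -> i \in r) ->
  \big[*%R/1]_(i \in A) f i = \big[*%R/1]_(i <- r | i \in A) f i.
Proof.
move=> ur H; rewrite [RHS]bigfs ?set_mem_set //.
by move=> i; rewrite inE => /H ->.
Qed.

Lemma memA (F : finFieldType) (f : {poly F}) (p : {poly F}) :
  (p \in [set q : {poly F} | monic_irr q /\ q %| f]) = [&& p \is monic, irreducibleb p & p %| f].
Proof.
apply/idP/idP => [/classical_sets.set_mem [[pm pI] pf]|/and3P [pm pI pf]].
  by rewrite pm pf /= andbT; apply/(irreducibleP p).
apply: classical_sets.mem_set; split => //; split => //.
exact: (elimT (irreducibleP p) pI).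
Qed.

Lemma memP (F : finFieldType) (m : nat) (p : {poly F}) :
  (p \in [set q : {poly F} | monic_irr q /\ ((size q).-1 <= m)%N]) =
  [&& p \is monic, irreducibleb p & ((size p).-1 <= m)%N].
Proof.
apply/idP/idP => [/classical_sets.set_mem [[pm pI] pf]|/and3P [pm pI pf]].
  by rewrite pm pf /= andbT; apply/(irreducibleP p).
apply: classical_sets.mem_set; split => //; split => //.
exact: (elimT (irreducibleP p) pI).
Qed.

Lemma universe (F : finFieldType) (N : nat) :
  exists r : seq {poly F}, uniq r /\ forall p : {poly F}, (size p <= N)%N -> p \in r.
Proof.
exists [seq val x | x <- npoly_enum F N]; split.
  by rewrite map_inj_uniq ?npoly_enum_uniq //; exact: val_inj.
move=> p sp; rewrite -(npolypK sp); apply: map_f; exact: mem_npoly_enum.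
Qed.

Lemma inv_le (R : realFieldType) (a b : nat) : (0 < a)%N -> (a <= b)%N ->
  (b%:R : R)^-1 <= (a%:R)^-1.
Proof.
move=> a0 ab; rewrite lef_pV2 ?posrE ?ltr0n ?ler_nat //; exact: leq_trans ab.
Qed.

Lemma sum_const_count (T : Type) (r : seq T) (P : pred T) (c : nat) :
  (\sum_(i <- r | P i) c)%N = (count P r * c)%N.
Proof.
elim: r => [|x r IH]; first by rewrite big_nil.
by rewrite big_cons /= IH; case: (P x) => //=; rewrite mulnDl mul1n.
Qed.

Lemma efac_ge0 (R : realType) (F : finFieldType) (p : {poly F}) : 0 <= efac R p.
Proof. by rewrite /efac addr_ge0 // invr_ge0 ler0n. Qed.

Theorem lemma1 (R : realType) (F : finFieldType) (f : {poly F}) (m : nat) :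
  f != 0 -> (1 <= m)%N -> ((size f).-1 <= #|F| ^ m)%N ->
  E R f <= Pm R F m.
Proof.
move=> fn0 m1 hf.
have q1 := finNzRing_gt1 F.
pose N := maxn (size f) m.+1.
have [r [ur hr]] := universe F N.
pose mi (p : {poly F}) := (p \is monic) && irreducibleb p.
pose d (p : {poly F}) := p %| f.
pose sm (p : {poly F}) := ((size p).-1 <= m)%N.
have EE : E R f = \prod_(p <- r | mi p && d p) efac R p.
  rewrite /E (fsbig_univ _ ur).
    by apply: eq_bigl => p; rewrite memA /mi /d andbA.
  move=> p [[pm pI] pf]; apply: hr; rewrite /N leq_max (dvdp_leq fn0 pf) //.
have PP : Pm R F m = \prod_(p <- r | mi p && sm p) efac R p.
  rewrite /Pm (fsbig_univ _ ur).
    by apply: eq_bigl => p; rewrite memP /mi /sm andbA.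
  move=> p [[pm pI] pf]; apply: hr; rewrite /N leq_max.
  apply/orP; right; move: pf; case: (size p) => //.
rewrite EE PP (bigID sm) /= [X in _ <= X](bigID d) /=.
have e1 : \prod_(i <- r | mi i && d i && sm i) efac R i =
          \prod_(i <- r | mi i && sm i && d i) efac R i.
  by apply: eq_bigl => i; rewrite -!andbA (andbC (d i)).
rewrite e1; apply: ler_wpM2l; first by apply: prodr_ge0 => i _; exact: efac_ge0.
have miP : forall p, mi p -> p \is monic /\ irreducible_poly p.
  by move=> p /andP [pm pI]; split => //; apply/(irreducibleP p).
have C1 : (\sum_(p <- r | mi p && d p) (size p).-1 <= (size f).-1)%N.
  have H := @prod_dvd F f (filter (fun p => mi p && d p) r) (filter_uniq _ ur).
  have /(dvdp_leq fn0) : \prod_(q <- filter (fun p => mi p && d p) r) q %| f.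
    apply: H => q; rewrite mem_filter => /andP [/andP [qmi qd] _].
    by have [qm qI] := miP q qmi; split.
  rewrite size_prod_monic; last first.
    by move=> q; rewrite mem_filter => /andP [/andP [/miP [] ]].
  rewrite big_filter; case: (size f) => // n; by rewrite ltnS.
have C2 : (#|F| ^ m <= \sum_(p <- r | mi p && sm p) (size p).-1)%N.
  have H : 'X^(#|F| ^ m) - 'X %| \prod_(q <- filter (fun p => mi p && sm p) r) q.
    apply: XQ_dvd_prod => //; first exact: filter_uniq.
      by move=> q; rewrite mem_filter => /andP [/andP [/miP H _ _]].
    move=> q qm qI qs; rewrite mem_filter /mi /sm qm qs andbT /=; apply/andP; split.
      exact/(irreducibleP q).
    apply: hr; rewrite /N leq_max; apply/orP; right; move: qs; case: (size q) => //.
  have hm : forall q, q \in filter (fun p => mi p && sm p) r -> q \is monic.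
    by move=> q; rewrite mem_filter => /andP [/andP [/miP [] ]].
  have := dvdp_leq _ H; rewrite -size_poly_eq0 size_prod_monic // big_filter => /(_ isT).
  rewrite size_polyDl size_polyXn // size_polyN size_polyX ltnS.
  by change (1 < #|F| ^ m)%N; rewrite -(expn0 #|F|) ltn_exp2l.
rewrite (bigID sm) /= in C1.
rewrite (bigID d) /= in C2.
have e2 : (\sum_(i <- r | mi i && d i && sm i) (size i).-1 =
          \sum_(i <- r | mi i && sm i && d i) (size i).-1)%N.
  by apply: eq_bigl => i; rewrite -!andbA (andbC (d i)).
rewrite e2 in C1.
set kL := count (fun i => mi i && d i && ~~ sm i) r.
set kS := count (fun i => mi i && sm i && ~~ d i) r.
have LL : (kL * m.+1 <= \sum_(i <- r | mi i && d i && ~~ sm i) (size i).-1)%N.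
  rewrite -sum_const_count; apply: leq_sum => i /andP [_].
  by rewrite /sm -ltnNge.
have SS : (\sum_(i <- r | mi i && sm i && ~~ d i) (size i).-1 <= kS * m)%N.
  rewrite -sum_const_count; apply: leq_sum => i /andP [/andP [_]].
  by rewrite /sm.
have hk : (kL * m.+1 <= kS * m)%N.
  apply: (leq_trans LL); apply: (leq_trans _ SS).
  rewrite -(leq_add2l (\sum_(i <- r | mi i && sm i && d i) (size i).-1)%N).
  exact: (leq_trans C1 (leq_trans hf C2)).
have kLS : (kL <= kS)%N.
  have h2 : (kL * m <= kS * m)%N := leq_trans (leq_mul (leqnn kL) (leqnSn m)) hk.
  by rewrite -(leq_pmul2r m1).
have kLQ : (kL <= #|F| ^ m)%N.
  apply: (leq_trans _ hf); apply: (leq_trans _ C1).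
  apply: (leq_trans _ (leq_addl _ _)); apply: (leq_trans _ LL).
  by rewrite leq_pmulr.
rewrite -(big_filter r (fun i => mi i && d i && ~~ sm i)).
rewrite -(big_filter r (fun i => mi i && sm i && ~~ d i)).
set L := [seq x <- r | mi x && d x && ~~ sm x].
set S := [seq x <- r | mi x && sm x && ~~ d x].
have sL : size L = kL by rewrite size_filter.
have sS : size S = kS by rewrite size_filter.
have qpos : (0 < #|F|)%N by apply: ltnW.
pose X : R := (#|F| ^ m)%:R.
pose v : R := (#|F|%:R)^-1.
have X0 : 0 < X by rewrite ltr0n expn_gt0 qpos.
have u0 : 0 <= X^-1 by rewrite invr_ge0 ltW.
have v0 : 0 <= v by rewrite invr_ge0 ler0n.
have v2 : 2 * v <= 1.
  have hv : v <= (2%:R)^-1 by apply: inv_le.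
  have h2 : (2%:R : R) * (2%:R)^-1 = 1 by rewrite mulfV // pnatr_eq0.
  lra.
have eY : ((#|F| ^ m.+1)%:R : R)^-1 = X^-1 * v by rewrite expnSr natrM invfM.
have kLX : kL%:R * X^-1 <= 1.
  apply: (@le_trans _ _ (X * X^-1)); last by rewrite mulfV // lt0r_neq0.
  by apply: ler_wpM2r => //; rewrite /X ler_nat.
have kLS' : (kL%:R : R) <= kS%:R by rewrite ler_nat.
apply: (@le_trans _ _ (1 + 2 * (size L)%:R * (X^-1 * v))).
  apply: prod_upper; first by rewrite mulr_ge0.
    move=> p; rewrite mem_filter => /andP [/andP [_ nsm] _].
    rewrite efac_ge0 /= /efac /pnorm lerD2l -eY; apply: inv_le; first by rewrite expn_gt0 qpos.
    by rewrite leq_pexp2l // ltnNge.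
  rewrite sL; nra.
apply: (@le_trans _ _ (1 + (size S)%:R * X^-1)); last first.
  apply: prod_lower => // p; rewrite mem_filter => /andP [/andP [/andP [_ psm] _] _].
  rewrite /efac /pnorm lerD2l; apply: inv_le; first by rewrite expn_gt0 qpos.
  by rewrite leq_pexp2l.
rewrite sL sS lerD2l.
have a1 : 0 <= kL%:R * X^-1 by rewrite mulr_ge0 // ler0n.
have a2 : kL%:R * X^-1 * (2 * v) <= kL%:R * X^-1 * 1 by apply: ler_wpM2l.
have a3 : kL%:R * X^-1 <= kS%:R * X^-1 by apply: ler_wpM2r.
have e : 2 * kL%:R * (X^-1 * v) = kL%:R * X^-1 * (2 * v) by ring.
rewrite e; lra.
Qed.
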